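(* Deciding whether a normal finitely recursive program $P$ is inconsistent is r.e.-hard.
   Context: A normal program is a finite set of rules $A\leftarrow L_1,\dots,L_n$ ($n\ge 0$), $A$ an atom, $L_i$ atoms or negated atoms $\mathtt{not}\,B$, over a first-order language possibly with function symbols. $\mathsf{Ground}(P)$ is its ground instantiation. For a set $M$ of ground atoms, $P^M$ is obtained from $\mathsf{Ground}(P)$ by deleting rules having some $\mathtt{not}\,B$ in the body with $B\in M$ and deleting negative literals from the remaining rules; $M$ is a stable model iff $M$ is the least Herbrand model of $P^M$. $P$ is inconsistent iff it has no stable model. The dependency graph has ground atoms as vertices and an edge $A\to B$ whenever some $r\in\mathsf{Ground}(P)$ has head $A$ and $B$ occurring in its body (positively or negated); $A$ depends on $B$ if there is a directed path from $A$ to $B$ (every atom depends on itself). $P$ is finitely recursive iff each ground atom depends on finitely many ground atoms. r.e.-hard means every recursively enumerable set is many-one reducible to the set of inconsistent normal finitely recursive programs. *)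

(* Defs.v *)
From Stdlib Require Import List Arith Relations.
Import ListNotations.

(* A function symbol is identified by its name together with its arity. *)
Inductive term : Type :=
| Var : nat -> term
| Fn : nat -> list term -> term.

Record atom : Type := mkAtom { pred_sym : nat; atom_args : list term }.

Inductive literal : Type :=
| Pos : atom -> literal
| Neg : atom -> literal.

Record rule : Type := mkRule { head : atom; body : list literal }.

Definition program : Type := list rule.

Definition lit_atom (l : literal) : atom :=
  match l with Pos a => a | Neg a => a end.

Inductive occurs_fn (f n : nat) : term -> Prop :=
| occ_root : forall ts, length ts = n -> occurs_fn f n (Fn f ts)
| occ_sub : forall g ts t, In t ts -> occurs_fn f n t -> occurs_fn f n (Fn g ts).

Definition atom_of_rule (r : rule) (a : atom) : Prop :=
  a = head r \/ exists l, In l (body r) /\ a = lit_atom l.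

Definition fsym_of (P : program) (f n : nat) : Prop :=
  exists r a t, In r P /\ atom_of_rule r a /\ In t (atom_args a) /\ occurs_fn f n t.

Definition hsym (P : program) (f n : nat) : Prop :=
  fsym_of P f n \/ (f = 0 /\ n = 0 /\ ~ (exists c, fsym_of P c 0)).

Inductive herbrand (P : program) : term -> Prop :=
| hu_fn : forall f ts, hsym P f (length ts) ->
    (forall t, In t ts -> herbrand P t) -> herbrand P (Fn f ts).

Definition ground_atom (P : program) (a : atom) : Prop :=
  forall t, In t (atom_args a) -> herbrand P t.

Fixpoint subst (s : nat -> term) (t : term) : term :=
  match t with
  | Var x => s x
  | Fn f ts => Fn f (map (subst s) ts)
  end.

Definition subst_atom (s : nat -> term) (a : atom) : atom :=
  mkAtom (pred_sym a) (map (subst s) (atom_args a)).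

Definition subst_lit (s : nat -> term) (l : literal) : literal :=
  match l with
  | Pos a => Pos (subst_atom s a)
  | Neg a => Neg (subst_atom s a)
  end.

Definition subst_rule (s : nat -> term) (r : rule) : rule :=
  mkRule (subst_atom s (head r)) (map (subst_lit s) (body r)).

Definition ground_rule (P : program) (r' : rule) : Prop :=
  exists r s, In r P /\ (forall x, herbrand P (s x)) /\ r' = subst_rule s r.

(* S is a model (closed set) of the reduct P^M *)
Definition closed_reduct (P : program) (M S : atom -> Prop) : Prop :=
  forall r, ground_rule P r ->
    (forall a, In (Neg a) (body r) -> ~ M a) ->
    (forall a, In (Pos a) (body r) -> S a) ->
    S (head r).

Definition least_model_reduct (P : program) (M : atom -> Prop) (a : atom) : Prop :=
  forall S, closed_reduct P M S -> S a.

Definition stable_model (P : program) (M : atom -> Prop) : Prop :=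
  forall a, M a <-> least_model_reduct P M a.

Definition inconsistent (P : program) : Prop :=
  ~ exists M, stable_model P M.

Definition dep_edge (P : program) (A B : atom) : Prop :=
  exists r, ground_rule P r /\ head r = A /\ (In (Pos B) (body r) \/ In (Neg B) (body r)).

Definition depends (P : program) : atom -> atom -> Prop :=
  clos_refl_trans atom (dep_edge P).

Definition finitely_recursive (P : program) : Prop :=
  forall A, ground_atom P A -> exists l : list atom, forall B, depends P A B -> In B l.

Inductive recf : Type :=
| RZero : recf
| RSucc : recf
| RProj : nat -> recf
| RComp : recf -> list recf -> recf
| RPrec : recf -> recf -> recf
| RMu : recf -> recf.

Inductive eval : recf -> list nat -> nat -> Prop :=
| ev_zero : forall v, eval RZero v 0
| ev_succ : forall v, eval RSucc v (S (nth 0 v 0))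
| ev_proj : forall i v, eval (RProj i) v (nth i v 0)
| ev_comp : forall f gs v ys z,
    Forall2 (fun g y => eval g v y) gs ys -> eval f ys z -> eval (RComp f gs) v z
| ev_prec0 : forall f g v z, eval f v z -> eval (RPrec f g) (0 :: v) z
| ev_precS : forall f g n v y z,
    eval (RPrec f g) (n :: v) y -> eval g (n :: y :: v) z ->
    eval (RPrec f g) (S n :: v) z
| ev_mu : forall f v n,
    eval f (n :: v) 0 ->
    (forall m, m < n -> exists k, eval f (m :: v) (S k)) ->
    eval (RMu f) v n.

Definition re_set (A : nat -> Prop) : Prop :=
  exists f : recf, forall n, A n <-> exists y, eval f [n] y.

Definition computable (h : nat -> nat) : Prop :=
  exists f : recf, forall n, eval f [n] (h n).

Definition cpair (a b : nat) : nat := (a + b) * (a + b + 1) / 2 + b.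

Fixpoint enc_list (l : list nat) : nat :=
  match l with
  | [] => 0
  | x :: l' => S (cpair x (enc_list l'))
  end.

Fixpoint enc_term (t : term) : nat :=
  match t with
  | Var x => cpair 0 x
  | Fn f ts => cpair 1 (cpair f (enc_list (map enc_term ts)))
  end.

Definition enc_atom (a : atom) : nat :=
  cpair (pred_sym a) (enc_list (map enc_term (atom_args a))).

Definition enc_lit (l : literal) : nat :=
  match l with
  | Pos a => cpair 0 (enc_atom a)
  | Neg a => cpair 1 (enc_atom a)
  end.

Definition enc_rule (r : rule) : nat :=
  cpair (enc_atom (head r)) (enc_list (map enc_lit (body r))).

Definition enc_program (P : program) : nat := enc_list (map enc_rule P).

Definition many_one_reducible (A : nat -> Prop) (B : program -> Prop) : Prop :=
  exists f : nat -> program,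
    computable (fun n => enc_program (f n)) /\ forall n, A n <-> B (f n).

Definition inconsistent_fr (P : program) : Prop :=
  finitely_recursive P /\ inconsistent P.

Definition re_hard (B : program -> Prop) : Prop :=
  forall A : nat -> Prop, re_set A -> many_one_reducible A B.

(* Main.v *)
Require Import Defs.
From Stdlib Require Import List Arith Lia Relations Classical.
Import ListNotations.
Import Defs.

Fixpoint cst (c : nat) : recf := match c with 0 => RZero | S c => RComp RSucc [cst c] end.
Lemma cst_ok c v : eval (cst c) v c.
Proof.
  induction c; simpl. constructor.
  eapply ev_comp. constructor. exact (IHc). constructor.
  exact (ev_succ [c]).
Qed.

Definition ADD := RPrec (RProj 0) (RComp RSucc [RProj 1]).
Lemma add_ok x y : eval ADD [x; y] (x + y).
Proof.
  induction x; simpl.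
  - constructor. exact (ev_proj 0 [y]).
  - eapply ev_precS. exact IHx.
    eapply ev_comp. constructor. exact (ev_proj 1 [x; x+y; y]). constructor.
    exact (ev_succ [x+y]).
Qed.

Lemma comp2 f g1 g2 v a b z : eval g1 v a -> eval g2 v b -> eval f [a; b] z ->
  eval (RComp f [g1; g2]) v z.
Proof. intros. eapply ev_comp; eauto. Qed.
Lemma comp1 f g1 v a z : eval g1 v a -> eval f [a] z -> eval (RComp f [g1]) v z.
Proof. intros. eapply ev_comp; eauto. Qed.

Fixpoint tri k := match k with 0 => 0 | S k' => S k' + tri k' end.
Definition TRI := RPrec RZero (RComp ADD [RComp RSucc [RProj 0]; RProj 1]).
Lemma tri_ok k : eval TRI [k] (tri k).
Proof.
  induction k; simpl.
  - constructor. constructor.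
  - eapply ev_precS. exact IHk.
    eapply comp2. eapply comp1. exact (ev_proj 0 [k; tri k]). exact (ev_succ [k]).
    exact (ev_proj 1 [k; tri k]). apply add_ok.
Qed.

Lemma tri_eq k : k * (k + 1) / 2 = tri k.
Proof.
  assert (H : k * (k + 1) = tri k * 2).
  { induction k; simpl; [reflexivity| nia]. }
  rewrite H. apply Nat.div_mul. lia.
Qed.

Definition CPAIR := RComp ADD [RComp TRI [RComp ADD [RProj 0; RProj 1]]; RProj 1].
Lemma cpair_ok a b : eval CPAIR [a; b] (cpair a b).
Proof.
  unfold cpair. rewrite tri_eq.
  eapply comp2. eapply comp1. eapply comp2. exact (ev_proj 0 [a;b]). exact (ev_proj 1 [a;b]).
  apply add_ok. apply tri_ok. exact (ev_proj 1 [a;b]). apply add_ok.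
Qed.

Inductive ex := EIn | EK (c : nat) | EP (a b : ex) | ES (a : ex).
Fixpoint den (x : ex) (e : nat) : nat :=
  match x with EIn => e | EK c => c | EP a b => cpair (den a e) (den b e) | ES a => S (den a e) end.
Fixpoint cmp (x : ex) (X : recf) : recf :=
  match x with EIn => X | EK c => cst c | EP a b => RComp CPAIR [cmp a X; cmp b X]
  | ES a => RComp RSucc [cmp a X] end.
Lemma cmp_ok x X v e : eval X v e -> eval (cmp x X) v (den x e).
Proof.
  intro H. induction x; simpl.
  - exact H.
  - apply cst_ok.
  - eapply comp2; eauto. apply cpair_ok.
  - eapply comp1; eauto. exact (ev_succ [den x e]).
Qed.

Lemma iter_ok (st : ex) (base : nat) (F : nat -> nat) :
  F 0 = base -> (forall k, F (S k) = den st (F k)) ->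
  forall n, eval (RPrec (cst base) (cmp st (RProj 1))) [n] (F n).
Proof.
  intros H0 HS n. induction n.
  - rewrite H0. constructor. apply cst_ok.
  - rewrite HS. eapply ev_precS. exact IHn. apply cmp_ok. exact (ev_proj 1 [n; F n]).
Qed.


Notation tZ := (Fn 0 []).
Notation tS x := (Fn 1 [x]).
Notation tN := (Fn 2 []).
Notation tC x y := (Fn 3 [x; y]).
Notation tD a b c e := (Fn 4 [a; b; c; e]).
Notation "# n" := (Var n) (at level 0, n at level 0).

Fixpoint num n := match n with 0 => tZ | S k => tS (num k) end.
Definition tlist (l : list term) := fold_right (fun x r => tC x r) tN l.
Definition encl v := tlist (map num v).
Fixpoint encf g := match g with
  | RZero => Fn 5 [] | RSucc => Fn 6 [] | RProj i => Fn 7 [num i]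
  | RComp f gs => Fn 8 [encf f; tlist (map encf gs)]
  | RPrec f g => Fn 9 [encf f; encf g] | RMu f => Fn 10 [encf f] end.

Definition r_sym := mkRule (mkAtom 5 [tZ; tS (#0); tN; tC (#0) (#0); tD (#0) (#0) (#0) (#0);
   Fn 5 []; Fn 6 []; Fn 7 [#0]; Fn 8 [#0;#0]; Fn 9 [#0;#0]; Fn 10 [#0]]) [].
Definition r_zero := mkRule (mkAtom 1 [tD (Fn 5 []) (#0) tZ tN]) [].
Definition r_succ0 := mkRule (mkAtom 1 [tD (Fn 6 []) tN (tS tZ) tN]) [].
Definition r_succ1 := mkRule (mkAtom 1 [tD (Fn 6 []) (tC (#0) (#1)) (tS (#0)) tN]) [].
Definition r_proj := mkRule (mkAtom 1 [tD (Fn 7 [#2]) (#0) (#1) tN]) [Pos (mkAtom 4 [#2; #0; #1])].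
Definition r_comp := mkRule (mkAtom 1 [tD (Fn 8 [#0; #1]) (#2) (#3) (tC (tD (#0) (#4) (#3) (#5)) (#6))])
  [Pos (mkAtom 1 [tD (#0) (#4) (#3) (#5)]); Pos (mkAtom 2 [#6; #1; #2; #4])].
Definition r_prec0 := mkRule (mkAtom 1 [tD (Fn 9 [#0;#1]) (tC tZ (#2)) (#3) (tC (tD (#0) (#2) (#3) (#4)) tN)])
  [Pos (mkAtom 1 [tD (#0) (#2) (#3) (#4)])].
Definition r_precS := mkRule (mkAtom 1 [tD (Fn 9 [#0;#1]) (tC (tS (#2)) (#3)) (#4)
   (tC (tD (Fn 9 [#0;#1]) (tC (#2) (#3)) (#5) (#6)) (tC (tD (#1) (tC (#2) (tC (#5) (#3))) (#4) (#7)) tN))])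
  [Pos (mkAtom 1 [tD (Fn 9 [#0;#1]) (tC (#2) (#3)) (#5) (#6)]);
   Pos (mkAtom 1 [tD (#1) (tC (#2) (tC (#5) (#3))) (#4) (#7)])].
Definition r_mu := mkRule (mkAtom 1 [tD (Fn 10 [#0]) (#1) (#2) (tC (tD (#0) (tC (#2) (#1)) tZ (#3)) (#4))])
  [Pos (mkAtom 1 [tD (#0) (tC (#2) (#1)) tZ (#3)]); Pos (mkAtom 3 [#4; #0; #1; #2])].
Definition r_vl0 := mkRule (mkAtom 2 [tN; tN; #0; tN]) [].
Definition r_vl1 := mkRule (mkAtom 2 [tC (tD (#0) (#1) (#2) (#3)) (#4); tC (#0) (#5); #1; tC (#2) (#6)])
  [Pos (mkAtom 1 [tD (#0) (#1) (#2) (#3)]); Pos (mkAtom 2 [#4; #5; #1; #6])].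
Definition r_b0 := mkRule (mkAtom 3 [tN; #0; #1; tZ]) [].
Definition r_b1 := mkRule (mkAtom 3 [tC (tD (#0) (tC (#2) (#1)) (tS (#3)) (#4)) (#5); #0; #1; tS (#2)])
  [Pos (mkAtom 1 [tD (#0) (tC (#2) (#1)) (tS (#3)) (#4)]); Pos (mkAtom 3 [#5; #0; #1; #2])].
Definition r_n00 := mkRule (mkAtom 4 [tZ; tN; tZ]) [].
Definition r_n01 := mkRule (mkAtom 4 [tZ; tC (#0) (#1); #0]) [].
Definition r_nS0 := mkRule (mkAtom 4 [tS (#0); tN; tZ]) [].
Definition r_nS1 := mkRule (mkAtom 4 [tS (#0); tC (#1) (#2); #3]) [Pos (mkAtom 4 [#0; #2; #3])].

Definition DP : program := [r_sym; r_zero; r_succ0; r_succ1; r_proj; r_comp; r_prec0; r_precS; r_mu;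
  r_vl0; r_vl1; r_b0; r_b1; r_n00; r_n01; r_nS0; r_nS1].

Definition TT g n := tD (encf g) (encl [n]) (#0) (#1).
Definition top g n := mkRule (mkAtom 0 [TT g n]) [Neg (mkAtom 0 [TT g n]); Pos (mkAtom 1 [TT g n])].
Definition PP g n := top g n :: DP.

Definition ex_step := EP (EK 1) (EP (EK 1) (ES (EP EIn (EK 0)))).
Lemma enc_num_S k : enc_term (num (S k)) = den ex_step (enc_term (num k)).
Proof. reflexivity. Qed.

Definition eL := EP (EK 1) (EP (EK 3) (ES (EP EIn (EK (enc_list (map enc_term [tN])))))).
Definition eT g := EP (EK 1) (EP (EK 4) (ES (EP (EK (enc_term (encf g)))
   (ES (EP eL (EK (enc_list (map enc_term [#0; #1])))))))).
Definition eAp g := EP (EK 0) (ES (EP (eT g) (EK 0))).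
Definition eAv g := EP (EK 1) (ES (EP (eT g) (EK 0))).
Definition eR g := EP (eAp g) (ES (EP (EP (EK 1) (eAp g)) (ES (EP (EP (EK 0) (eAv g)) (EK 0))))).
Definition eProg g K := ES (EP (eR g) (EK K)).

Lemma enc_prog_eq g n (Dl : program) :
  enc_program (top g n :: Dl) = den (eProg g (enc_list (map enc_rule Dl))) (enc_term (num n)).
Proof. cbn [den eProg eR eAp eAv eT eL]; reflexivity. Qed.

Lemma computable_PP g : computable (fun n => enc_program (PP g n)).
Proof.
  exists (cmp (eProg g (enc_list (map enc_rule DP)))
            (RPrec (cst (enc_term (num 0))) (cmp ex_step (RProj 1)))).
  intro n. unfold PP. rewrite enc_prog_eq. apply cmp_ok.
  apply (iter_ok ex_step (enc_term (num 0)) (fun n => enc_term (num n))).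
  reflexivity. intro k. reflexivity.
Qed.


Fixpoint term_ind' (P : term -> Prop) (HV : forall x, P (Var x))
  (HF : forall f ts, (forall t, In t ts -> P t) -> P (Fn f ts)) (t : term) : P t :=
  match t with
  | Var x => HV x
  | Fn f ts => HF f ts ((fix go (ts : list term) : forall t, In t ts -> P t :=
      match ts with
      | [] => fun t H => False_ind _ H
      | u :: us => fun t H => match H with
                    | or_introl e => eq_ind u P (term_ind' P HV HF u) t e
                    | or_intror H' => go us t H' end
      end) ts)
  end.

Fixpoint subs (t : term) : list term :=
  match t with Var x => [Var x] | Fn f ts => Fn f ts :: flat_map subs ts end.

Lemma subs_refl t : In t (subs t).
Proof. destruct t; simpl; auto. Qed.

Lemma subs_trans u : forall t w, In t (subs u) -> In w (subs t) -> In w (subs u).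
Proof.
  induction u using term_ind'; intros t w H1 H2.
  - simpl in H1. destruct H1 as [<-|[]]. exact H2.
  - simpl in H1. destruct H1 as [<-|H1]. exact H2.
    apply in_flat_map in H1 as [u [Hu Ht]].
    simpl. right. apply in_flat_map. exists u. split; auto. eapply H; eauto.
Qed.

Lemma subs_subst s u : forall t, In t (subs u) -> In (subst s t) (subs (subst s u)).
Proof.
  induction u using term_ind'; intros t Ht.
  - simpl in Ht. destruct Ht as [<-|[]]. apply subs_refl.
  - simpl in Ht. destruct Ht as [<-|Ht]. apply subs_refl.
    apply in_flat_map in Ht as [u [Hu Ht]].
    simpl. right. apply in_flat_map. exists (subst s u). split.
    apply in_map; auto. apply H; auto.
Qed.

Definition RP (r : rule) : Prop :=
  forall l, In l (body r) ->
    pred_sym (lit_atom l) <= 4 /\ length (atom_args (lit_atom l)) <= 4 /\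
    forall t, In t (atom_args (lit_atom l)) -> In t (flat_map subs (atom_args (head r))).

Ltac solve_in := repeat (first [apply in_eq | apply in_cons]).

Lemma RP_DP : forall r, In r DP -> RP r.
Proof.
  intros r Hr. simpl in Hr. unfold RP.
  repeat destruct Hr as [<-|Hr]; try contradiction;
  intros l Hl; simpl in Hl; repeat destruct Hl as [<-|Hl]; try contradiction;
  (split; [simpl; lia| split; [simpl; lia|]]);
  intros t Ht; simpl in Ht; repeat destruct Ht as [<-|Ht]; try contradiction;
  simpl; repeat (first [left; reflexivity | right]).
Qed.

Lemma RP_top g n : RP (top g n).
Proof.
  intros l Hl; simpl in Hl; repeat destruct Hl as [<-|Hl]; try contradiction;
  (split; [simpl; lia| split; [simpl; lia|]]);
  intros t Ht; simpl in Ht; repeat destruct Ht as [<-|Ht]; try contradiction;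
  simpl; left; reflexivity.
Qed.

Lemma RP_PP g n : forall r, In r (PP g n) -> RP r.
Proof. intros r [<-|Hr]. apply RP_top. apply RP_DP; auto. Qed.

Lemma edge_prop P (HP : forall r, In r P -> RP r) y z : dep_edge P y z ->
  pred_sym z <= 4 /\ length (atom_args z) <= 4 /\
  forall t, In t (atom_args z) -> In t (flat_map subs (atom_args y)).
Proof.
  intros [r [[r0 [s [Hin [_ ->]]]] [Hh Hb]]].
  assert (Hl : exists l, In l (body r0) /\ z = subst_atom s (lit_atom l)).
  { simpl in Hb. destruct Hb as [Hb|Hb]; apply in_map_iff in Hb as [l [Hl1 Hl2]];
    exists l; split; auto; destruct l; simpl in Hl1; inversion Hl1; reflexivity. }
  destruct Hl as [l [Hl ->]]. destruct (HP r0 Hin l Hl) as [H1 [H2 H3]].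
  subst y. simpl. rewrite length_map. split; auto. split; auto.
  intros t Ht. apply in_map_iff in Ht as [t0 [<- Ht0]].
  apply H3 in Ht0. apply in_flat_map in Ht0 as [u [Hu Ht0]].
  apply in_flat_map. exists (subst s u). split. apply in_map; auto.
  apply subs_subst; auto.
Qed.

Fixpoint all_lists (k : nat) (L : list term) : list (list term) :=
  match k with 0 => [[]] | S k => flat_map (fun x => map (cons x) (all_lists k L)) L end.

Lemma all_lists_ok L l : (forall x, In x l -> In x L) -> In l (all_lists (length l) L).
Proof.
  induction l; intros H; simpl. auto.
  apply in_flat_map. exists a. split. apply H; simpl; auto.
  apply in_map. apply IHl. intros; apply H; simpl; auto.
Qed.

Definition cands (A : atom) : list atom :=
  let L := flat_map subs (atom_args A) in
  A :: flat_map (fun p => flat_map (fun k => map (mkAtom p) (all_lists k L)) (seq 0 5)) (seq 0 5).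

Lemma fin_rec P (HP : forall r, In r P -> RP r) : finitely_recursive P.
Proof.
  intros A _. exists (cands A).
  assert (Hinv : forall B, depends P A B -> B = A \/
     (pred_sym B <= 4 /\ length (atom_args B) <= 4 /\
      forall t, In t (atom_args B) -> In t (flat_map subs (atom_args A)))).
  { intros B HB. apply clos_rt_rtn1 in HB. induction HB as [|y z Hyz Hr IH]. auto.
    right. destruct (edge_prop P HP y z Hyz) as [H1 [H2 H3]]. split; auto. split; auto.
    intros t Ht. apply H3 in Ht. destruct IH as [->|[_ [_ IH]]]. auto.
    apply in_flat_map in Ht as [u [Hu Ht]]. apply IH in Hu.
    apply in_flat_map in Hu as [w [Hw Hu]]. apply in_flat_map. exists w. split; auto.
    eapply subs_trans; eauto. }
  intros B HB. destruct (Hinv B HB) as [->|[H1 [H2 H3]]]. left; auto.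
  right. apply in_flat_map. exists (pred_sym B). split. apply in_seq. lia.
  apply in_flat_map. exists (length (atom_args B)). split. apply in_seq. lia.
  destruct B as [p args]. apply in_map. apply all_lists_ok. exact H3.
Qed.


Fixpoint decn t := match t with Fn 1 [x] => S (decn x) | _ => 0 end.
Fixpoint decl t := match t with Fn 3 [x; r] => decn x :: decl r | _ => [] end.
Fixpoint decf t := match t with
  | Fn 5 [] => RZero | Fn 6 [] => RSucc | Fn 7 [i] => RProj (decn i)
  | Fn 8 [f; gs] => RComp (decf f) (decfl gs)
  | Fn 9 [f; g] => RPrec (decf f) (decf g) | Fn 10 [f] => RMu (decf f) | _ => RZero end
with decfl t := match t with Fn 3 [g; r] => decf g :: decfl r | _ => [] end.

Fixpoint recf_ind' (P : recf -> Prop) (H0 : P RZero) (H1 : P RSucc) (H2 : forall i, P (RProj i))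
  (H3 : forall f gs, P f -> (forall g, In g gs -> P g) -> P (RComp f gs))
  (H4 : forall f g, P f -> P g -> P (RPrec f g)) (H5 : forall f, P f -> P (RMu f)) (r : recf) : P r :=
  let F := recf_ind' P H0 H1 H2 H3 H4 H5 in
  match r with
  | RZero => H0 | RSucc => H1 | RProj i => H2 i
  | RComp f gs => H3 f gs (F f) ((fix go (gs : list recf) : forall g, In g gs -> P g :=
      match gs with
      | [] => fun g H => False_ind _ H
      | u :: us => fun g H => match H with
                    | or_introl e => eq_ind u P (F u) g e
                    | or_intror H' => go us g H' end
      end) gs)
  | RPrec f g => H4 f g (F f) (F g)
  | RMu f => H5 f (F f)
  end.

Lemma decn_num n : decn (num n) = n.
Proof. induction n; simpl; congruence. Qed.
Lemma decl_encl v : decl (encl v) = v.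
Proof. induction v; simpl; auto. rewrite decn_num. f_equal. exact IHv. Qed.
Lemma decf_encf g : decf (encf g) = g.
Proof.
  induction g using recf_ind'; simpl; try congruence.
  - rewrite decn_num; auto.
  - rewrite IHg. f_equal. induction gs; simpl; auto.
    rewrite H by (simpl; auto). f_equal. apply IHgs. intros; apply H; simpl; auto.
Qed.

Lemma subst_num s n : subst s (num n) = num n.
Proof. induction n; simpl; congruence. Qed.
Lemma subst_encl s v : subst s (encl v) = encl v.
Proof. induction v; simpl; auto. unfold encl in *. simpl. rewrite subst_num, IHv. reflexivity. Qed.
Lemma subst_encf s g : subst s (encf g) = encf g.
Proof.
  induction g using recf_ind'; simpl; try congruence.
  - rewrite subst_num; auto.
  - rewrite IHg. do 3 f_equal. induction gs; simpl; auto.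
    rewrite H by (simpl; auto). do 3 f_equal. 
    specialize (IHgs (fun g Hg => H g (or_intror Hg))). simpl in IHgs. congruence.
Qed.

Definition Sem (a : atom) : Prop :=
  match pred_sym a, atom_args a with
  | 1, [Fn 4 [G; V; Y; _]] => eval (decf G) (decl V) (decn Y)
  | 2, [_; GS; V; YS] => Forall2 (fun g y => eval g (decl V) y) (decfl GS) (decl YS)
  | 3, [_; F; V; N] => forall m, m < decn N -> exists k, eval (decf F) (m :: decl V) (S k)
  | 4, [i0; V; Y] => nth (decn i0) (decl V) 0 = decn Y
  | 5, _ => True
  | _, _ => False
  end.

Lemma Sem_closed g n : closed_reduct (PP g n) (fun _ => True) Sem.
Proof.
  intros r [r0 [s [Hin [_ ->]]]] Hneg Hpos.
  destruct Hin as [<-|Hin].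
  { exfalso. eapply (Hneg _). simpl. left. reflexivity. exact I. }
  simpl in Hin. repeat destruct Hin as [<-|Hin]; try contradiction;
  simpl in Hpos; unfold Sem; simpl.
  - exact I.
  - constructor.
  - exact (ev_succ []).
  - exact (ev_succ (decn (s 0) :: decl (s 1))).
  - specialize (Hpos _ (or_introl eq_refl)). unfold Sem in Hpos; simpl in Hpos. rewrite <- Hpos. constructor.
  - pose proof (Hpos _ (or_introl eq_refl)) as H1. pose proof (Hpos _ (or_intror (or_introl eq_refl))) as H2.
    unfold Sem in H1, H2; simpl in H1, H2. econstructor; eauto.
  - pose proof (Hpos _ (or_introl eq_refl)) as H1. unfold Sem in H1; simpl in H1. constructor. exact H1.
  - pose proof (Hpos _ (or_introl eq_refl)) as H1. pose proof (Hpos _ (or_intror (or_introl eq_refl))) as H2.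
    unfold Sem in H1, H2; simpl in H1, H2. econstructor; eauto.
  - pose proof (Hpos _ (or_introl eq_refl)) as H1. pose proof (Hpos _ (or_intror (or_introl eq_refl))) as H2.
    unfold Sem in H1, H2; simpl in H1, H2. constructor; auto.
  - constructor.
  - pose proof (Hpos _ (or_introl eq_refl)) as H1. pose proof (Hpos _ (or_intror (or_introl eq_refl))) as H2.
    unfold Sem in H1, H2; simpl in H1, H2. constructor; auto.
  - intros m Hm; lia.
  - pose proof (Hpos _ (or_introl eq_refl)) as H1. pose proof (Hpos _ (or_intror (or_introl eq_refl))) as H2.
    unfold Sem in H1, H2; simpl in H1, H2. intros m Hm. destruct (Nat.eq_dec m (decn (s 2))) as [->|Hne].
    eauto. apply H2. lia.
  - reflexivity.
  - reflexivity.
  - reflexivity.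
  - specialize (Hpos _ (or_introl eq_refl)). unfold Sem in Hpos; simpl in Hpos. exact Hpos.
Qed.


Definition syms : list (nat * nat) :=
  [(0,0); (1,1); (2,0); (3,2); (4,4); (5,0); (6,0); (7,1); (8,2); (9,2); (10,1)].

Lemma hsym_PP g n f k : In (f, k) syms -> hsym (PP g n) f k.
Proof.
  intro H. left. exists r_sym, (head r_sym).
  simpl in H. repeat destruct H as [H|H]; try contradiction; injection H; intros <- <-;
  [exists tZ | exists (tS (#0)) | exists tN | exists (tC (#0) (#0)) | exists (tD (#0) (#0) (#0) (#0))
  | exists (Fn 5 []) | exists (Fn 6 []) | exists (Fn 7 [#0]) | exists (Fn 8 [#0;#0])
  | exists (Fn 9 [#0;#0]) | exists (Fn 10 [#0])];
  (split; [right; left; reflexivity | split; [left; reflexivity | split;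
     [simpl; repeat (first [left; reflexivity | right]) | apply occ_root; reflexivity]]]).
Qed.

Lemma hF g n f ts : In (f, length ts) syms -> (forall t, In t ts -> herbrand (PP g n) t) ->
  herbrand (PP g n) (Fn f ts).
Proof. intros H1 H2. constructor; auto. apply hsym_PP; auto. Qed.

Ltac hb0 := repeat (first [ assumption | apply hF; [simpl; repeat (first [left; reflexivity | right]) |
   let t := fresh "t" in let Ht := fresh "Ht" in
   intros t Ht; simpl in Ht; repeat destruct Ht as [<-|Ht]; try contradiction]]).

Lemma herb_num g n m : herbrand (PP g n) (num m).
Proof. induction m; simpl; hb0; auto. Qed.
Lemma herb_encl g n v : herbrand (PP g n) (encl v).
Proof. induction v; unfold encl in *; simpl; hb0; try apply herb_num; try exact IHv. Qed.
Lemma herb_tlist g n l : (forall t, In t l -> herbrand (PP g n) t) -> herbrand (PP g n) (tlist l).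
Proof. induction l; intros H; simpl; hb0. apply H; simpl; auto. apply IHl. intros; apply H; simpl; auto. Qed.
Lemma herb_encf g n h : herbrand (PP g n) (encf h).
Proof.
  induction h using recf_ind'; simpl; hb0; auto; try apply herb_num.
  apply herb_tlist. intros t Ht. apply in_map_iff in Ht as [u [<- Hu]]. auto.
Qed.

Lemma herb_tle g n gs : herbrand (PP g n) (tlist (map encf gs)).
Proof. apply herb_tlist. intros t Ht. apply in_map_iff in Ht as [u [<- Hu]]. apply herb_encf. Qed.

Ltac hb := repeat (first [ assumption | apply herb_encf | apply herb_encl | apply herb_num | apply herb_tle | apply hF; [simpl; repeat (first [left; reflexivity | right]) |
   let t := fresh "t" in let Ht := fresh "Ht" in
   intros t Ht; simpl in Ht; repeat destruct Ht as [<-|Ht]; try contradiction]]).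

Definition sl (l : list term) : nat -> term := fun x => nth x l tZ.
Lemma herb_sl g n l : (forall t, In t l -> herbrand (PP g n) t) -> forall x, herbrand (PP g n) (sl l x).
Proof.
  intros H x. unfold sl. destruct (Nat.lt_ge_cases x (length l)).
  apply H, nth_In; auto. rewrite nth_overflow by auto. hb.
Qed.

Lemma use_rule P M S r0 s a : closed_reduct P M S -> In r0 P -> (forall x, herbrand P (s x)) ->
  (forall b, ~ In (Neg b) (body r0)) -> (forall b, In (Pos b) (body r0) -> S (subst_atom s b)) ->
  a = subst_atom s (head r0) -> S a.
Proof.
  intros HS Hin Hs Hn Hp ->. apply (HS (subst_rule s r0)).
  - exists r0, s. auto.
  - intros b Hb. exfalso. simpl in Hb. apply in_map_iff in Hb as [l [Hl1 Hl2]].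
    destruct l; simpl in Hl1; inversion Hl1; subst. eapply Hn; eauto.
  - intros b Hb. simpl in Hb. apply in_map_iff in Hb as [l [Hl1 Hl2]].
    destruct l; simpl in Hl1; inversion Hl1; subst. auto.
Qed.

Definition Dv P g v y D := forall M S, closed_reduct P M S -> S (mkAtom 1 [tD (encf g) (encl v) (num y) D]).

Ltac inPP := right; simpl; repeat (first [left; reflexivity | right]).
Ltac noneg := let b := fresh in let Hb := fresh in
  intros b Hb; simpl in Hb; repeat destruct Hb as [Hb|Hb]; try discriminate; contradiction.

Ltac herbs := apply herb_sl; simpl; intros ? Ht; repeat destruct Ht as [<-|Ht]; try contradiction;
      auto using herb_num, herb_encl, herb_encf, herb_tle.

Lemma nth_ok g0 n0 : forall i v M S, closed_reduct (PP g0 n0) M S ->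
  S (mkAtom 4 [num i; encl v; num (nth i v 0)]).
Proof.
  induction i; intros v M S HS; destruct v as [|a v].
  - eapply (use_rule _ M S r_n00 (sl [])); [exact HS | inPP | herbs | noneg | simpl; tauto | reflexivity].
  - eapply (use_rule _ M S r_n01 (sl [num a; encl v])); [exact HS | inPP | herbs | noneg | simpl; tauto | reflexivity].
  - eapply (use_rule _ M S r_nS0 (sl [num i])); [exact HS | inPP | herbs | noneg | simpl; tauto | reflexivity].
  - eapply (use_rule _ M S r_nS1 (sl [num i; num a; encl v; num (nth i v 0)]));
      [exact HS | inPP | herbs | noneg | | reflexivity].
    intros b [Hb|[]]. injection Hb; intros <-. exact (IHi v M S HS).
Qed.

Definition eval_ind' (P : recf -> list nat -> nat -> Prop)
  (Hz : forall v, P RZero v 0)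
  (Hs : forall v, P RSucc v (S (nth 0 v 0)))
  (Hp : forall i v, P (RProj i) v (nth i v 0))
  (Hc : forall f gs v ys z, Forall2 (fun g y => eval g v y /\ P g v y) gs ys ->
  eval f ys z -> P f ys z -> P (RComp f gs) v z)
  (Hp0 : forall f g v z, eval f v z -> P f v z -> P (RPrec f g) (0 :: v) z)
  (HpS : forall f g n v y z, eval (RPrec f g) (n :: v) y -> P (RPrec f g) (n :: v) y ->
  eval g (n :: y :: v) z -> P g (n :: y :: v) z -> P (RPrec f g) (S n :: v) z)
  (Hm : forall f v n, eval f (n :: v) 0 -> P f (n :: v) 0 ->
  (forall m, m < n -> exists k, eval f (m :: v) (S k) /\ P f (m :: v) (S k)) -> P (RMu f) v n) : forall g v y, eval g v y -> P g v y :=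
  fix eval_ind' g v y (H : eval g v y) {struct H} : P g v y :=
  match H in eval g v y return P g v y with
  | ev_zero v => Hz v
  | ev_succ v => Hs v
  | ev_proj i v => Hp i v
  | ev_comp f gs v ys z HF Hf =>
      Hc f gs v ys z
        ((fix go gs ys (HF : Forall2 (fun g y => eval g v y) gs ys)
            : Forall2 (fun g y => eval g v y /\ P g v y) gs ys :=
          match HF in Forall2 _ gs ys return Forall2 (fun g y => eval g v y /\ P g v y) gs ys with
          | Forall2_nil _ => @Forall2_nil _ _ _
          | @Forall2_cons _ _ _ g y gs' ys' h hs =>
              @Forall2_cons _ _ _ g y gs' ys' (conj h (eval_ind' g v y h)) (go gs' ys' hs)
          end) gs ys HF)
        Hf (eval_ind' f ys z Hf)
  | ev_prec0 f g v z Hf => Hp0 f g v z Hf (eval_ind' f v z Hf)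
  | ev_precS f g n v y z H1 H2 => HpS f g n v y z H1 (eval_ind' _ _ _ H1) H2 (eval_ind' _ _ _ H2)
  | ev_mu f v n H0 H1 => Hm f v n H0 (eval_ind' _ _ _ H0)
      (fun m Hlt => match H1 m Hlt with
                    | ex_intro _ k Hk => ex_intro _ k (conj Hk (eval_ind' _ _ _ Hk)) end)
  end.

Lemma VL g0 n0 v : forall gs ys,
  Forall2 (fun g y => eval g v y /\ exists D, herbrand (PP g0 n0) D /\ Dv (PP g0 n0) g v y D) gs ys ->
  exists DS, herbrand (PP g0 n0) DS /\ forall M S, closed_reduct (PP g0 n0) M S ->
    S (mkAtom 2 [DS; tlist (map encf gs); encl v; encl ys]).
Proof.
  induction 1 as [|g y gs ys [_ [D [HD1 HD2]]] _ [DS [HS1 HS2]]].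
  - exists tN. split. hb. intros M S HS.
    eapply (use_rule _ M S r_vl0 (sl [encl v])); [exact HS|inPP|herbs|noneg|simpl;tauto|reflexivity].
  - exists (tC (tD (encf g) (encl v) (num y) D) DS). split. hb; auto using herb_encf, herb_encl, herb_num.
    intros M S HS.
    eapply (use_rule _ M S r_vl1 (sl [encf g; encl v; num y; D; DS; tlist (map encf gs); encl ys]));
      [exact HS|inPP|herbs| noneg | |reflexivity].
    intros b Hb; simpl in Hb; destruct Hb as [Hb|[Hb|[]]]; injection Hb; intros <-.
    exact (HD2 M S HS). exact (HS2 M S HS).
Qed.

Lemma BL g0 n0 f v : forall n,
  (forall m, m < n -> exists k, exists D, herbrand (PP g0 n0) D /\ Dv (PP g0 n0) f (m :: v) (S k) D) ->
  exists DS, herbrand (PP g0 n0) DS /\ forall M S, closed_reduct (PP g0 n0) M S ->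
    S (mkAtom 3 [DS; encf f; encl v; num n]).
Proof.
  induction n; intros H.
  - exists tN. split. hb. intros M S HS.
    eapply (use_rule _ M S r_b0 (sl [encf f; encl v])); [exact HS|inPP|herbs|noneg|simpl;tauto|reflexivity].
  - destruct (H n (Nat.lt_succ_diag_r n)) as [k [D [HD1 HD2]]].
    destruct IHn as [DS [HS1 HS2]]. intros m Hm; apply H; lia.
    exists (tC (tD (encf f) (encl (n :: v)) (num (S k)) D) DS). split. hb; auto using herb_encf, herb_encl, herb_num.
    intros M S HS.
    eapply (use_rule _ M S r_b1 (sl [encf f; encl v; num n; num k; D; DS]));
      [exact HS|inPP|herbs| noneg | |reflexivity].
    intros b Hb; simpl in Hb; destruct Hb as [Hb|[Hb|[]]]; injection Hb; intros <-.
    exact (HD2 M S HS). exact (HS2 M S HS).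
Qed.

Lemma complete g0 n0 : forall g v y, eval g v y ->
  exists D, herbrand (PP g0 n0) D /\ Dv (PP g0 n0) g v y D.
Proof.
  apply eval_ind'.
  - intros v. exists tN. split. hb. intros M S HS.
    eapply (use_rule _ M S r_zero (sl [encl v])); [exact HS|inPP|herbs|noneg|simpl;tauto|reflexivity].
  - intros [|a v]; exists tN; (split; [hb|]); intros M S HS.
    + eapply (use_rule _ M S r_succ0 (sl [])); [exact HS|inPP|herbs|noneg|simpl;tauto|reflexivity].
    + eapply (use_rule _ M S r_succ1 (sl [num a; encl v])); [exact HS|inPP|herbs|noneg|simpl;tauto|reflexivity].
  - intros i v. exists tN. split. hb. intros M S HS.
    eapply (use_rule _ M S r_proj (sl [encl v; num (nth i v 0); num i])); [exact HS|inPP|herbs|noneg| |reflexivity].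
    intros b [Hb|[]]. injection Hb; intros <-. exact (nth_ok g0 n0 i v M S HS).
  - intros f gs v ys z HF _ [DF [HF1 HF2]].
    destruct (VL g0 n0 v gs ys HF) as [DS [HS1 HS2]].
    exists (tC (tD (encf f) (encl ys) (num z) DF) DS). split. hb; auto using herb_encf, herb_encl, herb_num.
    intros M S HS.
    eapply (use_rule _ M S r_comp (sl [encf f; tlist (map encf gs); encl v; num z; encl ys; DF; DS]));
      [exact HS|inPP|herbs| noneg | |reflexivity].
    intros b Hb; simpl in Hb; destruct Hb as [Hb|[Hb|[]]]; injection Hb; intros <-.
    exact (HF2 M S HS). exact (HS2 M S HS).
  - intros f g v z _ [DF [HF1 HF2]].
    exists (tC (tD (encf f) (encl v) (num z) DF) tN). split. hb; auto using herb_encf, herb_encl, herb_num.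
    intros M S HS.
    eapply (use_rule _ M S r_prec0 (sl [encf f; encf g; encl v; num z; DF]));
      [exact HS|inPP|herbs| noneg | |reflexivity].
    intros b Hb; simpl in Hb; destruct Hb as [Hb|[]]; injection Hb; intros <-.
    exact (HF2 M S HS).
  - intros f g n v y z _ [D1 [H11 H12]] _ [D2 [H21 H22]].
    exists (tC (tD (encf (RPrec f g)) (encl (n :: v)) (num y) D1) (tC (tD (encf g) (encl (n :: y :: v)) (num z) D2) tN)).
    split. hb; auto using herb_encf, herb_encl, herb_num.
    intros M S HS.
    eapply (use_rule _ M S r_precS (sl [encf f; encf g; num n; encl v; num z; num y; D1; D2]));
      [exact HS|inPP|herbs| noneg | |reflexivity].
    intros b Hb; simpl in Hb; destruct Hb as [Hb|[Hb|[]]]; injection Hb; intros <-.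
    exact (H12 M S HS). exact (H22 M S HS).
  - intros f v n _ [D0 [H01 H02]] Hlt.
    destruct (BL g0 n0 f v n) as [DS [HS1 HS2]].
    { intros m Hm. destruct (Hlt m Hm) as [k [_ HK]]. eauto. }
    exists (tC (tD (encf f) (encl (n :: v)) (num 0) D0) DS). split. hb; auto using herb_encf, herb_encl, herb_num.
    intros M S HS.
    eapply (use_rule _ M S r_mu (sl [encf f; encl v; num n; D0; DS]));
      [exact HS|inPP|herbs| noneg | |reflexivity].
    intros b Hb; simpl in Hb; destruct Hb as [Hb|[Hb|[]]]; injection Hb; intros <-.
    exact (H02 M S HS). exact (HS2 M S HS).
Qed.


Lemma subst_TT g n s k : subst_atom s (mkAtom k [TT g n]) = mkAtom k [tD (encf g) (encl [n]) (s 0) (s 1)].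
Proof.
  change (subst_atom s (mkAtom k [TT g n])) with
    (mkAtom k [Fn 4 [subst s (encf g); subst s (encl [n]); s 0; s 1]]).
  rewrite subst_encf, subst_encl. reflexivity.
Qed.

Lemma DP_pred r : In r DP -> pred_sym (head r) <> 0.
Proof. intro H. simpl in H. repeat destruct H as [<-|H]; try contradiction; simpl; discriminate. Qed.

Lemma DP_noneg r : In r DP -> forall b, ~ In (Neg b) (body r).
Proof.
  intros H b. simpl in H. repeat destruct H as [<-|H]; try contradiction; simpl;
  intros Hb; repeat destruct Hb as [Hb|Hb]; try discriminate; contradiction.
Qed.

Lemma halts_incons g n : (exists y, eval g [n] y) -> inconsistent (PP g n).
Proof.
  intros [y Hy] [M HM]. destruct (complete g n g [n] y Hy) as [D [HD1 HD2]].
  set (pT := mkAtom 0 [tD (encf g) (encl [n]) (num y) D]).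
  assert (C1 : ~ M pT).
  { intro HMp. apply (proj1 (HM pT) HMp (fun a => a <> pT)); [|reflexivity].
    intros r [r0 [s [Hin [Hs ->]]]] Hneg Hpos Heq.
    destruct Hin as [<-|Hin].
    - assert (E : subst_atom s (mkAtom 0 [TT g n]) = pT) by exact Heq.
      apply (Hneg (subst_atom s (mkAtom 0 [TT g n]))). simpl; left; reflexivity.
      rewrite E. exact HMp.
    - apply (DP_pred r0 Hin). apply (f_equal pred_sym) in Heq. exact Heq. }
  apply C1. apply (proj2 (HM pT)). intros S HS.
  set (s := sl [num y; D]).
  assert (E : head (subst_rule s (top g n)) = pT).
  { change (subst_atom s (mkAtom 0 [TT g n]) = pT). rewrite subst_TT. reflexivity. }
  rewrite <- E. apply HS.
  - exists (top g n), s. split. left; reflexivity. split; auto.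
    apply herb_sl. simpl. intros t [<-|[<-|[]]]. apply herb_num. exact HD1.
  - intros b Hb. simpl in Hb. destruct Hb as [Hb|[Hb|[]]]; try discriminate.
    injection Hb; intros <-. rewrite subst_TT. exact C1.
  - intros b Hb. simpl in Hb. destruct Hb as [Hb|[Hb|[]]]; try discriminate.
    injection Hb; intros <-. rewrite subst_TT. exact (HD2 M S HS).
Qed.

Lemma nohalt_cons g n : ~ (exists y, eval g [n] y) -> exists M, stable_model (PP g n) M.
Proof.
  intros Hnh.
  set (M0 := fun a => forall S, closed_reduct (PP g n) (fun _ => True) S -> S a).
  assert (F1 : forall a, M0 a -> Sem a). { intros a Ha. apply Ha. apply Sem_closed. }
  assert (F2 : closed_reduct (PP g n) M0 M0).
  { intros r [r0 [s [Hin [Hs ->]]]] Hneg Hpos.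
    destruct Hin as [<-|Hin].
    - exfalso. apply Hnh.
      assert (H := Hpos (subst_atom s (mkAtom 1 [TT g n])) (or_intror (or_introl eq_refl))).
      apply F1 in H. rewrite subst_TT in H.
      change (eval (decf (encf g)) (decl (encl [n])) (decn (s 0))) in H.
      rewrite decf_encf, decl_encl in H. eauto.
    - intros S HS. apply HS.
      + exists r0, s. split; [right; exact Hin | auto].
      + intros b Hb. exfalso. simpl in Hb. apply in_map_iff in Hb as [l [Hl1 Hl2]].
        destruct l; simpl in Hl1; inversion Hl1; subst. eapply DP_noneg; eauto.
      + intros b Hb. apply (Hpos b Hb S HS). }
  exists M0. intros a. split.
  - intros Ha S HS. apply Ha. intros r Hr Hneg Hpos. apply HS; auto.
    intros b Hb _. exact (Hneg b Hb I).
  - intros Ha. apply Ha. exact F2.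
Qed.


Theorem theorem5p4 : re_hard inconsistent_fr.
Proof.
  intros A [fR HA]. exists (PP fR). split. apply computable_PP.
  intros n. rewrite HA. split.
  - intro H. split. apply fin_rec, RP_PP. apply halts_incons; auto.
  - intros [_ Hinc]. apply NNPP. intro Hn. apply Hinc. apply nohalt_cons; auto.
Qed.
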